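(* Let $k_+,k_-,t$ be integers with $0\leq k_-\leq k_+$, $k_++k_-\geq 1$ and $t>0$, and let $M\triangleq [-k_-,k_+]^*$. Let $\overline{\psi}(x)$ be the largest prime not larger than $x$, and let $p\triangleq\overline{\psi}(k_++k_-+1)$. Then for any integer $m>0$ there exists $S\subseteq (\mathbb{Z}_{p^m})^t$ with $|S|=t\cdot\frac{p^m-1}{p-1}$ such that $(\mathbb{Z}_{p^m})^t\leq M \diamond_t S$, and thereby a lattice covering of $\mathbb{Z}^n$, $n=|S|$, by $\mathcal{B}(n,t,k_+,k_-)$ with density \[\delta = \frac{ \sum_{i=0}^{t} \binom{n}{i} (k_++k_-)^i }{ ( n(p-1)/t+1 )^t }=\frac{(t(k_++k_-))^t}{t!(p-1)^t}+o(1),\] where $o(1)$ refers to $m\to\infty$ (equivalently $n\to\infty$) with $t,k_\pm$ fixed.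
   Context: $[a,b]^*=\{a,a+1,\dots,b\}\setminus\{0\}$. For a finite Abelian group $G$, a finite set $M\subseteq\mathbb{Z}\setminus\{0\}$ and $S=\{s_1,\dots,s_n\}\subseteq G$, we write $G\le M\diamond_t S$ if for every $g\in G$ there is $\mathbf{e}\in(M\cup\{0\})^n$ of Hamming weight at most $t$ with $g=\sum_i e_is_i$. $\mathcal{B}(n,t,k_+,k_-)=\{\mathbf{x}\in\mathbb{Z}^n : -k_-\le x_i\le k_+ \text{ for all } i,\ \mathrm{wt}(\mathbf{x})\le t\}$ ($\mathrm{wt}$ = Hamming weight). A lattice covering of $\mathbb{Z}^n$ by $\mathcal{B}$ is a lattice $\Lambda\subseteq\mathbb{Z}^n$ with $\bigcup_{\mathbf{v}\in\Lambda}(\mathbf{v}+\mathcal{B})=\mathbb{Z}^n$; its density is $|\mathcal{B}|/\mathrm{vol}(\Lambda)$, $\mathrm{vol}(\Lambda)=|\mathbb{Z}^n/\Lambda|$. *)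

(* Defs.v *)
From HB Require Import structures.
From mathcomp Require Import all_boot all_order all_algebra.
Set Implicit Arguments. Unset Strict Implicit. Unset Printing Implicit Defensive.
Import Order.TTheory GRing.Theory Num.Theory.
Local Open Scope ring_scope.

Definition intv_star (a b : int) : pred int := fun x => (a <= x <= b) && (x != 0).

(* G <= M <>_t S : every g is sum_{s in S} e_s s with e_s in M u {0},
   Hamming weight of e at most t.  (S is a finite set of group elements,
   indexed by itself.) *)
Definition diamond_cover (G : finZmodType) (M : pred int) (t : nat) (S : {set G}) :=
  forall g : G, exists e : G -> int,
    (forall s, s \in S -> (M (e s) || (e s == 0))) /\
    (#|[set s in S | e s != 0]| <= t)%N /\
    g = \sum_(s in S) (s *~ e s).

Definition wt n (x : 'rV[int]_n) : nat := #|[set i : 'I_n | x ord0 i != 0]|.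

Definition ballB (n t kp km : nat) : pred 'rV[int]_n :=
  fun x => [forall i, (- (km%:Z) <= x ord0 i <= kp%:Z)] && (wt x <= t)%N.

Arguments ballB : clear implicits.

Definition pcard (T : eqType) (P : T -> Prop) (c : nat) :=
  exists s : seq T, uniq s /\ (forall x, x \in s <-> P x) /\ size s = c.

Definition lat_index n (L : 'rV[int]_n -> Prop) (N : nat) :=
  exists reps : seq 'rV[int]_n,
    size reps = N /\
    (forall i j, (i < N)%N -> (j < N)%N -> L (nth 0 reps i - nth 0 reps j) -> i = j) /\
    (forall x, exists2 r, r \in reps & L (x - r)).

(* A lattice in Z^n: a subgroup of Z^n of finite index (full rank) *)
Definition is_lattice n (L : 'rV[int]_n -> Prop) :=
  L 0 /\ (forall x y, L x -> L y -> L (x - y)) /\ exists N, lat_index L N.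

Definition lattice_covering n (L : 'rV[int]_n -> Prop) (B : pred 'rV[int]_n) :=
  is_lattice L /\ forall x, exists v, L v /\ B (x - v).

Definition has_density n (L : 'rV[int]_n -> Prop) (B : pred 'rV[int]_n) (d : rat) :=
  exists cB N, pcard (fun x => B x) cB /\ lat_index L N /\ d = cB%:R / N%:R.

Definition psibar (x : nat) : nat := \max_(q < x.+1 | prime q) q.

(* Main.v *)
Require Import Defs.
From HB Require Import structures.
From mathcomp Require Import all_boot all_order all_algebra.
From mathcomp Require Import zify ring lra.
Import Order.TTheory GRing.Theory Num.Theory.

Module PartC.
Import Order.TTheory GRing.Theory Num.Theory.

Definition lowd p n := (n %/ p ^ logn p n) %% p.

Lemma lowd_pf p u j : prime p -> coprime p u -> lowd p (u * p ^ j) = u %% p.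
Proof.
move=> pp cu; rewrite /lowd logn_Gauss // pfactorK // mulnK // expn_gt0 prime_gt0 //.
Qed.

Lemma lowd_mul p m a x : prime p -> 0 < x < p ^ m -> coprime p a ->
  0 < (a * x) %% p ^ m /\ lowd p ((a * x) %% p ^ m) = (a * lowd p x) %% p.
Proof.
move=> pp /andP[x0 xm] ca.
have [u cu xE] := pfactor_coprime pp x0.
set j := logn p x in xE.
have jm : j < m.
  rewrite -(ltn_exp2l _ _ (prime_gt1 pp)); apply: leq_ltn_trans xm.
  rewrite xE leq_pmull // lt0n; apply/eqP => u0; move: x0; rewrite xE u0.
  by [].
have qE : p ^ m = p ^ (m - j) * p ^ j by rewrite -expnD subnK // ltnW.
have au : coprime p (a * u) by rewrite coprimeMr ca cu.
set w := (a * u) %% p ^ (m - j).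
have wp : w %% p = (a * u) %% p.
  rewrite /w modn_dvdm //.
  by rewrite -{1}(expn1 p) dvdn_exp2l // subn_gt0.
have cw : coprime p w.
  rewrite prime_coprime // /dvdn wp -/(dvdn _ _) -prime_coprime //.
have yE : (a * x) %% p ^ m = w * p ^ j by rewrite xE mulnA qE muln_modl.
rewrite yE lowd_pf // wp xE lowd_pf // modnMmr; split => //.
rewrite muln_gt0 expn_gt0 (prime_gt0 pp) /= andbT lt0n; apply/eqP => w0.
by move: cw; rewrite w0 /coprime gcdn0; move/eqP => p1; move: (prime_gt1 pp); rewrite p1.
Qed.
Local Open Scope ring_scope.
Lemma Zp_valM (N : nat) (a : nat) (x : 'Z_N) : (1 < N)%N ->
  val (a%:R * x) = ((a * val x) %% N)%N.
Proof.
case: N x => [|[|n]] x // _.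
rewrite /= Zp_nat /= modnMml //.
Qed.

Lemma Zp_neq0 (N : nat) (x : 'Z_N) : (x != 0) = (0 < val x)%N.
Proof. by rewrite lt0n. Qed.

Lemma Zp_natE (N : nat) (x : 'Z_N) : (1 < N)%N -> x = (val x)%:R.
Proof. case: N x => [|[|n]] x // _. by rewrite natr_Zp. Qed.

Lemma Zp_valN (N : nat) (x : 'Z_N) : (1 < N)%N -> (val x < N)%N.
Proof. case: N x => [|[|n]] x // _. exact: ltn_ord. Qed.

Lemma Zp_N0 (N : nat) (x : 'Z_N) : (1 < N)%N -> x *+ N = 0.
Proof. case: N x => [|[|n]] x // _. rewrite -mulr_natl. rewrite Zp_nat; apply/val_inj; rewrite /= modnn mul0n mod0n. done. Qed.

Lemma Zp_val1 (N : nat) : (1 < N)%N -> val (1 : 'Z_N) = 1%N.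
Proof. by case: N => [|[|n]]. Qed.

Lemma lowd_coprime p x : prime p -> (0 < x)%N -> coprime p (lowd p x).
Proof.
move=> pp x0; have [u cu xE] := pfactor_coprime pp x0.
by rewrite xE lowd_pf // coprime_modr.
Qed.

Lemma lowd_ltp p x : prime p -> (lowd p x < p)%N.
Proof. by move=> pp; rewrite /lowd ltn_mod prime_gt0. Qed.

Definition S1 p m : {set 'Z_(p ^ m)} :=
  [set x : 'Z_(p ^ m) | (x != 0) && (lowd p (val x) == 1%N)].

Lemma N1 p m : prime p -> (0 < m)%N -> (1 < p ^ m)%N.
Proof.
move=> pp m0; rewrite -{1}(expn0 p) ltn_exp2l ?prime_gt1 //.
Qed.

Lemma lowd_mulZ p m (x : 'Z_(p ^ m)) (a : nat) : prime p -> (0 < m)%N ->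
  x != 0 -> coprime p a ->
  a%:R * x != 0 /\ lowd p (val (a%:R * x)) = ((a * lowd p (val x)) %% p)%N.
Proof.
move=> pp m0 x0 ca.
have q1 := @N1 p m pp m0.
rewrite Zp_neq0 Zp_valM // in x0 *.
have := @lowd_mul p m a (val x) pp; rewrite x0 Zp_valN //.
move=> /(_ isT ca) [h1 h2]; split => //.
by rewrite Zp_neq0 Zp_valM.
Qed.

Lemma core p m (x : 'Z_(p ^ m)) (a : nat) : prime p -> (0 < m)%N ->
  x != 0 -> (a %% p)%N = lowd p (val x) -> exists2 s, s \in S1 p m & x = a%:R * s.
Proof.
move=> pp m0 x0 ax.
have q1 := @N1 p m pp m0.
have ca : coprime p a.
  by rewrite -coprime_modr ax lowd_coprime // -Zp_neq0.
have ua : (a%:R : 'Z_(p ^ m)) \is a GRing.unit.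
  by rewrite unitZpE // coprime_pexpl.
set b := val ((a%:R : 'Z_(p ^ m))^-1).
have bE : (a%:R : 'Z_(p ^ m))^-1 = b%:R by exact: Zp_natE.
have ab : ((a * b) %% p)%N = 1%N.
  have : val ((a%:R : 'Z_(p ^ m)) * b%:R) = 1%N by rewrite -bE mulrV // Zp_val1.
  rewrite Zp_valM // -(@Zp_natE _ (a%:R : 'Z_(p ^ m))^-1 q1) -/b => h.
  rewrite -(modn_dvdm _ (m := p ^ m)) ?h ?modn_small ?prime_gt1 //.
  by rewrite -{1}(expn1 p) dvdn_exp2l.
have cb : coprime p b.
  have : coprime p (a * b) by rewrite -coprime_modr ab coprimen1.
  by rewrite coprimeMr => /andP[].
exists (b%:R * x); last by rewrite mulrA -bE mulrV // mul1r.
have [h1 h2] := @lowd_mulZ p m x b pp m0 x0 cb.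
rewrite inE h1 h2 -ax modnMmr mulnC ab //.
Qed.

End PartC.
Import PartC.

Module PartD.
Import Order.TTheory GRing.Theory Num.Theory.
Local Open Scope ring_scope.

Lemma coprime_small p a : prime p -> (0 < a < p)%N -> coprime p a.
Proof.
move=> pp /andP[a0 ap]; rewrite prime_coprime //; apply/negP => /dvdn_leq.
by move=> /(_ a0); rewrite leqNgt ap.
Qed.

Lemma card_Zq N : (1 < N)%N -> #|'Z_N| = N.
Proof. by case: N => [|[|n]]// _; rewrite card_ord. Qed.

Lemma card_S1 p m : prime p -> (0 < m)%N ->
  ((p - 1) * #|S1 p m|)%N = (p ^ m - 1)%N.
Proof.
move=> pp m0; have q1 := @N1 p m pp m0.
pose f := fun z : 'I_(p - 1) * 'Z_(p ^ m) => (z.1.+1)%:R * z.2.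
have E : f @: setX setT (S1 p m) = [set~ 0].
  apply/setP => x; rewrite !inE; apply/imsetP/idP.
    case=> [[i s]]; rewrite !inE /= => /andP[s0 _] ->.
    have ci : coprime p i.+1 by apply: coprime_small => //; move: (ltn_ord i); lia.
    by case: (@lowd_mulZ p m s i.+1 pp m0 s0 ci).
  move=> x0.
  have ca := @lowd_coprime p (val x) pp; rewrite -Zp_neq0 x0 in ca.
  have := ca isT => {}ca.
  have a0 : (0 < lowd p (val x))%N.
    rewrite lt0n; apply/eqP => a0; move: ca; rewrite a0 /coprime gcdn0 => /eqP p1.
    by move: (prime_gt1 pp); rewrite p1.
  have ap := @lowd_ltp p (val x) pp.
  have [s sS xE] := @core p m x (lowd p (val x)) pp m0 x0 (modn_small ap).
  have ip : ((lowd p (val x)).-1 < p - 1)%N by lia.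
  exists (Ordinal ip, s); first by move: sS; rewrite !inE.
  by rewrite /f /= prednK.
have inj : {in setX setT (S1 p m) &, injective f}.
  move=> [i s] [j s']; rewrite !inE /= => /andP[s0 s1] /andP[s0' s1'].
  rewrite /f /= => e.
  have ci : coprime p i.+1 by apply: coprime_small => //; move: (ltn_ord i); lia.
  have cj : coprime p j.+1 by apply: coprime_small => //; move: (ltn_ord j); lia.
  have [_ h1] := @lowd_mulZ p m s i.+1 pp m0 s0 ci.
  have [_ h2] := @lowd_mulZ p m s' j.+1 pp m0 s0' cj.
  have ij : i = j.
    move: h1 h2; rewrite e => ->; rewrite (eqP s1) (eqP s1') !muln1.
    rewrite !modn_small; [|move: (ltn_ord j); lia|move: (ltn_ord i); lia].
    by move=> [] /val_inj.
  subst j; congr (_, _).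
  have ua : ((i.+1)%:R : 'Z_(p ^ m)) \is a GRing.unit.
    by rewrite unitZpE // coprime_pexpl.
  by move: e; apply: (mulrI ua).
have := card_in_imset inj; rewrite E cardsX cardsT card_ord cardsC1 card_Zq //.
by move=> <-; rewrite subn1.
Qed.

End PartD.
Import PartD.

Module PartE.
Import Order.TTheory GRing.Theory Num.Theory.
Set Implicit Arguments. Unset Strict Implicit.
Local Open Scope ring_scope.

Definition emb (R : zmodType) t (i : 'I_t) (x : R) : 'rV[R]_t :=
  \row_j (if j == i then x else 0).

Lemma emb_mulz (R : zmodType) t (i : 'I_t) (x : R) (c : int) :
  emb i (x *~ c) = emb i x *~ c.
Proof.
case: c => n; [rewrite -!pmulrn | rewrite NegzE -!nmulrn];
  apply/rowP => j; rewrite !mxE ?mulmxnE !mxE; case: (j == i); by rewrite ?mul0rn ?oppr0.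
Qed.

Lemma emb0 (R : zmodType) t (i : 'I_t) : emb i (0 : R) = 0.
Proof. by apply/rowP => j; rewrite !mxE; case: (j == i). Qed.

Lemma emb_inj (R : zmodType) t (i j : 'I_t) (x y : R) : x != 0 ->
  emb i x = emb j y -> i = j /\ x = y.
Proof.
move=> x0 /rowP /(_ i); rewrite !mxE eqxx.
by case: eqP => [-> //|_ h]; move: x0; rewrite h eqxx.
Qed.

Lemma sum_emb (R : zmodType) t (g : 'rV[R]_t) : \sum_i emb i (g ord0 i) = g.
Proof.
apply/rowP => j; rewrite summxE (bigD1 j) //= big1 ?addr0.
  by rewrite !mxE eqxx; congr (g _ _); apply: val_inj; case: ord0 => [[|]].
by move=> i ij; rewrite !mxE eq_sym (negbTE ij).
Qed.

End PartE.
Import PartE.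

Module PartF.
Import Order.TTheory GRing.Theory Num.Theory.
Set Implicit Arguments. Unset Strict Implicit.
Local Open Scope ring_scope.

Lemma one_coord p m kp km (x : 'Z_(p ^ m)) : prime p -> (0 < m)%N ->
  (p <= kp + km + 1)%N -> x != 0 ->
  exists cs : int * 'Z_(p ^ m),
    [&& intv_star (- km%:Z) kp%:Z cs.1, cs.2 \in S1 p m & x == cs.2 *~ cs.1].
Proof.
move=> pp m0 pk x0.
have q1 := @N1 p m pp m0.
set d := lowd p (val x).
have ca := @lowd_coprime p (val x) pp; rewrite -Zp_neq0 x0 in ca.
have := ca isT => {}ca.
have d0 : (0 < d)%N.
  rewrite lt0n; apply/eqP => a0; move: ca; rewrite -/d a0 /coprime gcdn0 => /eqP p1.
  by move: (prime_gt1 pp); rewrite p1.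
have dp : (d < p)%N := @lowd_ltp p (val x) pp.
have pq : (p <= p ^ m)%N.
  by rewrite -{1}(expn1 p) leq_exp2l ?prime_gt1.
case: (leqP d kp) => dk.
  have [s sS xE] := @core p m x d pp m0 x0 (modn_small dp).
  exists (d%:Z, s); rewrite /= sS /intv_star xE -pmulrn mulr_natl eqxx !andbT.
  apply/andP; split; last by rewrite eqz_nat -lt0n.
  apply/andP; split; last by rewrite lez_nat.
  by apply: (@le_trans _ _ 0); rewrite ?oppr_le0 ?lez_nat.
pose a := (p ^ m - p + d)%N.
have am : (a %% p)%N = d.
  have [r rE] : exists r, (p ^ m = r.+1 * p)%N.
    by exists (m.-1 ^ 0 * p ^ m.-1).-1; rewrite expn0 mul1n prednK ?expn_gt0 ?prime_gt0 // -expnSr prednK.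
  have -> : (a = r * p + d)%N by rewrite /a rE mulSn; lia.
  by rewrite modnMDl modn_small.
have [s sS xE] := @core p m x a pp m0 x0 am.
exists (d%:Z - p%:Z, s); rewrite /= sS /intv_star xE mulr_natl.
apply/and3P; split => //.
- apply/andP; split; [lia|]. lia.
- rewrite /a mulrnDr mulrnBr // Zp_N0 // sub0r mulrzBr -!pmulrn addrC.
  by [].
Qed.

Definition Sfull p m t : {set 'rV['Z_(p ^ m)]_t} :=
  [set emb z.1 z.2 | z in setX [set: 'I_t] (S1 p m)].

Lemma S1_neq0 p m s : s \in S1 p m -> s != 0.
Proof. by rewrite inE => /andP[]. Qed.

Lemma card_Sfull p m t : #|Sfull p m t| = (t * #|S1 p m|)%N.
Proof.
rewrite card_in_imset ?cardsX ?cardsT ?card_ord //.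
move=> [i x] [j y]; rewrite in_setX /= => /andP[_ xS] _ h.
by have [-> ->] := emb_inj (S1_neq0 xS) h.
Qed.

Lemma cover_Sfull p m t kp km : prime p -> (0 < m)%N -> (p <= kp + km + 1)%N ->
  diamond_cover (intv_star (- km%:Z) kp%:Z) t (Sfull p m t).
Proof.
move=> pp m0 pk g.
have H : forall i, exists cs : int * 'Z_(p ^ m), (g ord0 i == 0) ||
    [&& intv_star (- km%:Z) kp%:Z cs.1, cs.2 \in S1 p m & g ord0 i == cs.2 *~ cs.1].
  move=> i; case: (eqVneq (g ord0 i) 0) => [->|gi]; first by exists (0, 0).
  by have [cs h] := one_coord pp m0 pk gi; exists cs; rewrite h orbT.
pose cs i := xchoose (H i).
have csP i : g ord0 i != 0 -> [&& intv_star (- km%:Z) kp%:Z (cs i).1,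
    (cs i).2 \in S1 p m & g ord0 i == (cs i).2 *~ (cs i).1].
  by move=> gi; have /orP[|//] := xchooseP (H i); rewrite (negbTE gi).
pose A := [set i | g ord0 i != 0].
pose e s := if [pick i in A | s == emb i (cs i).2] is Some i then (cs i).1 else 0.
exists e; split; [|split].
- move=> s _; rewrite /e; case: pickP => [i /andP[iA _]|_]; last by rewrite eqxx orbT.
  by rewrite inE in iA; have /and3P[-> _ _] := csP i iA.
- apply: (@leq_trans #|[set emb i (cs i).2 | i in 'I_t]|); last first.
    by apply: leq_trans (leq_imset_card _ _) _; rewrite card_ord.
  apply: subset_leq_card; apply/subsetP => s; rewrite inE => /andP[_].
  rewrite /e; case: pickP => [i /andP[_ /eqP ->] _ | _]; last by rewrite eqxx.
  exact: imset_f.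
pose I' := [set emb i (cs i).2 | i in A].
have sA i : i \in A -> (cs i).2 \in S1 p m.
  by rewrite inE => /csP /and3P[].
have IS : I' \subset Sfull p m t.
  apply/subsetP => s /imsetP[i iA ->]; apply/imsetP; exists (i, (cs i).2) => //.
  by rewrite in_setX in_setT sA.
have inj : {in A &, injective (fun i => emb i (cs i).2)}.
  by move=> i j iA _ h; have [] := emb_inj (S1_neq0 (sA i iA)) h.
have eE i : i \in A -> e (emb i (cs i).2) = (cs i).1.
  move=> iA; rewrite /e; case: pickP => [j /andP[jA /eqP h]| /(_ i)]; last by rewrite iA eqxx.
  by have [<- _] := emb_inj (S1_neq0 (sA i iA)) h.
rewrite (big_setID I') /= (setIidPr IS) [X in _ + X]big1 ?addr0; last first.
  move=> s; rewrite !inE => /andP[sI _]; rewrite /e; case: pickP => [j /andP[jA /eqP h]|_].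
    by move: sI; rewrite h /I' (imset_f _ jA).
  by rewrite mulr0z.
rewrite big_imset //= -[LHS]sum_emb.
rewrite (bigID (mem A)) /= [X in _ + X]big1 ?addr0; last first.
  by move=> i; rewrite inE negbK => /eqP ->; rewrite emb0.
apply: eq_bigr => i iA; rewrite eE // -emb_mulz.
by rewrite inE in iA; have /and3P[_ _ /eqP <-] := csP i iA.
Qed.

End PartF.
Import PartF.

Module PartG.
Import Order.TTheory GRing.Theory Num.Theory.
Set Implicit Arguments. Unset Strict Implicit.
Local Open Scope ring_scope.

Lemma lattice_part (G : finZmodType) (M : pred int) t kp km (S : {set G}) n :
  #|S| = n ->
  (forall c, M c -> (- km%:Z <= c <= kp%:Z)) -> diamond_cover M t S ->
  exists L : 'rV[int]_n -> Prop, lattice_covering L (ballB n t kp km) /\ lat_index L #|G|.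
Proof.
move=> HS; subst n => MB cov.
pose sv (i : 'I_#|S|) : G := enum_val i.
pose phi (x : 'rV[int]_#|S|) := \sum_i sv i *~ x ord0 i.
have phiB x y : phi (x - y) = phi x - phi y.
  by rewrite /phi -sumrB; apply: eq_bigr => i _; rewrite !mxE mulrzBr.
have phi0 : phi 0 = 0 by rewrite /phi big1 // => i _; rewrite mxE mulr0z.
have Hex g : exists r : 'rV[int]_#|S|, (phi r == g) && ballB #|S| t kp km r.
  have [e [eM [ew eg]]] := cov g.
  exists (\row_i e (sv i)); apply/andP; split.
    rewrite /phi eg; apply/eqP; rewrite [RHS]big_enum_val /=; apply: eq_bigr => i _; rewrite mxE.
    by [].
  rewrite /ballB; apply/andP; split.
    apply/forallP => i; rewrite mxE.
    have /orP[/MB //|/eqP ->] := eM _ (enum_valP i).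
    by rewrite oppr_le0 !lez_nat.
  apply: leq_trans ew; rewrite /wt.
  have -> : [set s in S | e s != 0] = sv @: [set i | (\row_i e (sv i)) ord0 i != 0].
    apply/setP => s; rewrite !inE; apply/andP/imsetP.
      move=> [sS es]; exists (enum_rank_in sS s); last by rewrite /sv enum_rankK_in.
      by rewrite inE mxE /sv enum_rankK_in.
    by move=> [i]; rewrite inE mxE => ei ->; split => //; apply: enum_valP.
  by rewrite card_imset //; apply: enum_val_inj.
pose rep g := xchoose (Hex g).
have repP g : phi (rep g) = g /\ ballB #|S| t kp km (rep g).
  by have /andP[/eqP ? ?] := xchooseP (Hex g).
exists (fun x => phi x = 0); split; last first.
  exists [seq rep g | g <- enum G]; split; first by rewrite size_map cardT.
  split.
    move=> i j iG jG.
    have iG' : (i < size (Finite.enum G))%N by rewrite -enumT -cardT.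
    have jG' : (j < size (Finite.enum G))%N by rewrite -enumT -cardT.
    rewrite phiB => /eqP; rewrite subr_eq0 (nth_map 0) ?(nth_map 0) -?cardT //.
    rewrite !(proj1 (repP _)) -!enumT => h.
    by apply/eqP; rewrite -(@nth_uniq _ 0 (enum G)) -?cardT ?enum_uniq // h.
  move=> x; exists (rep (phi x)); first by apply: map_f; rewrite mem_enum.
  by rewrite phiB (proj1 (repP _)) subrr.
split.
  split; first exact: phi0.
  split; first by move=> x y hx hy; rewrite phiB hx hy subrr.
  exists #|G|.
  exists [seq rep g | g <- enum G]; split; first by rewrite size_map cardT.
  split.
    move=> i j iG jG.
    have iG' : (i < size (Finite.enum G))%N by rewrite -enumT -cardT.
    have jG' : (j < size (Finite.enum G))%N by rewrite -enumT -cardT.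
    rewrite phiB => /eqP; rewrite subr_eq0 (nth_map 0) ?(nth_map 0) -?cardT //.
    rewrite !(proj1 (repP _)) -!enumT => h.
    by apply/eqP; rewrite -(@nth_uniq _ 0 (enum G)) -?cardT ?enum_uniq // h.
  move=> x; exists (rep (phi x)); first by apply: map_f; rewrite mem_enum.
  by rewrite phiB (proj1 (repP _)) subrr.
move=> x; exists (x - rep (phi x)); split.
  by rewrite phiB (proj1 (repP _)) subrr.
by rewrite opprB addrC subrK; exact: (proj2 (repP _)).
Qed.

End PartG.
Import PartG.

Module PartH.
Import Order.TTheory GRing.Theory Num.Theory.
Set Implicit Arguments. Unset Strict Implicit.

Lemma card_supp (T R : finType) (y0 : R) j :
  #|[set f : {ffun T -> R} | #|[set i | f i != y0]| == j]| = 'C(#|T|, j) * #|R|.-1 ^ j.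
Proof.
rewrite -sum1_card (partition_big (fun f : {ffun T -> R} => [set i | f i != y0])
   (fun D : {set T} => #|D| == j)) /=; last by move=> f; rewrite inE.
rewrite -(card_draws T j).
transitivity (\sum_(D in [set D : {set T} | #|D| == j]) #|R|.-1 ^ j); last first.
  by rewrite sum_nat_const.
apply: eq_big => [D|D Dj]; first by rewrite inE.
rewrite -(cardC1 y0) -(eqP Dj) -(card_pffun_on y0) -[RHS]sum1_card.
apply: eq_bigl => f; rewrite inE.
apply/andP/pffun_onP.
  move=> [fj /eqP <-]; split.
    by apply/subsetP => x; rewrite !inE.
  by move=> y /imageP[x]; rewrite inE => fx ->; rewrite !inE.
move=> [sD im].
suff E : [set i | f i != y0] = D by rewrite E eqxx.
apply/setP => x; rewrite inE; apply/idP/idP.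
  by move=> fx; apply: (subsetP sD); rewrite inE.
by move=> xD; have := im (f x) (image_f f xD); rewrite !inE.
Qed.

Lemma card_le (T : finType) (h : T -> nat) t :
  #|[set f | h f <= t]| = \sum_(j < t.+1) #|[set f | h f == j]|.
Proof.
elim: t => [|t IH].
  by rewrite big_ord1; apply: eq_card => f; rewrite !inE leqn0.
rewrite big_ord_recr /= -IH -(cardsID [set f | h f <= t] [set f | h f <= t.+1]).
congr (_ + _); apply: eq_card => f; rewrite !inE.
  by case: (ltngtP (h f) t.+1) => //; lia.
by case: (ltngtP (h f) t.+1) => //; lia.
Qed.

Local Open Scope ring_scope.

Lemma int_enc (y : int) km kp : - km%:Z <= y <= kp%:Z ->
  (absz (y + km%:Z)%R < (kp + km).+1)%N /\ (absz (y + km%:Z))%:Z - km%:Z = y.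
Proof. move=> /andP[h1 h2]; split; lia. Qed.

Lemma ball_count n t kp km :
  pcard (fun x => ballB n t kp km x) (\sum_(i < t.+1) 'C(n, i) * (kp + km) ^ i)%N.
Proof.
set k := (kp + km)%N.
pose z : 'I_k.+1 := inord km.
have zE : nat_of_ord z = km by rewrite /z inordK // ltnS leq_addl.
pose enc (f : {ffun 'I_n -> 'I_k.+1}) : 'rV[int]_n := \row_i ((f i)%:Z - km%:Z).
pose P := [set f : {ffun 'I_n -> 'I_k.+1} | (#|[set i | f i != z]| <= t)%N].
have encI : injective enc.
  move=> f g /rowP h; apply/ffunP => i; move: (h i); rewrite !mxE.
  by move/addIr => [] /val_inj.
have wtE f : wt (enc f) = #|[set i | f i != z]|.
  rewrite /wt; apply: eq_card => i; rewrite !inE mxE subr_eq0 eqz_nat.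
  by rewrite -zE; congr negb; apply/eqP/eqP => [/val_inj|->].
exists [seq enc f | f <- enum P]; split; first by rewrite map_inj_uniq // enum_uniq.
split; last first.
  rewrite size_map -cardE /P card_le; apply: eq_bigr => j _.
  by rewrite card_supp !card_ord.
move=> x; split.
  move=> /mapP[f]; rewrite mem_enum inE => ft ->.
  rewrite /ballB wtE ft andbT; apply/forallP => i; rewrite mxE.
  have := ltn_ord (f i); rewrite /k => h; apply/andP; split.
    by rewrite lerBrDr addNr.
  by rewrite lerBlDr -PoszD lez_nat.
rewrite /ballB => /andP[/forallP xb xt].
pose f := [ffun i => inord (absz (x ord0 i + km%:Z)) : 'I_k.+1].
have fE : enc f = x.
  apply/rowP => i; rewrite !mxE ffunE.
  have [h1 h2] := int_enc (xb i).
  by rewrite inordK.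
apply/mapP; exists f => //; rewrite mem_enum inE -wtE fE //.
Qed.

End PartH.
Import PartH.

Module PartI.
Import Order.TTheory GRing.Theory Num.Theory.
Set Implicit Arguments. Unset Strict Implicit.

Lemma lexp a b e : a <= b -> a ^ e <= b ^ e.
Proof. by move=> ab; elim: e => // e IH; rewrite !expnS leq_mul. Qed.

Lemma ffact_lo N j : (N - j) ^ j <= N ^_ j.
Proof.
elim: j N => [|j IH] N; first by rewrite ffactn0.
rewrite ffactnS expnS; apply: leq_mul; first exact: leq_subr.
by apply: leq_trans (IH N.-1); apply: lexp; lia.
Qed.

Lemma ffact_hi N j : N ^_ j <= N ^ j.
Proof.
elim: j N => [|j IH] N; first by rewrite ffactn0.
rewrite ffactnS expnS; apply: leq_mul => //.
by apply: leq_trans (IH N.-1) _; apply: lexp; lia.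
Qed.

Lemma bern q p t : p <= q -> q ^ t <= (q - p) ^ t + t * p * q ^ t.-1.
Proof.
move=> pq; elim: t => [|t IH] //=.
case: t IH => [|t] IH; first by rewrite !expn1 expn0; lia.
rewrite /= in IH *.
have h1 : q ^ t.+2 = q * q ^ t.+1 by rewrite expnS.
have h2 : (q - p) ^ t.+2 = (q - p) * (q - p) ^ t.+1 by rewrite expnS.
have h3 : q ^ t.+1 = q * q ^ t by rewrite expnS.
have h4 : (q - p) ^ t.+1 <= q ^ t.+1 by apply: lexp; lia.
rewrite h1 h2; rewrite h3 in IH h4 *.
set X := q ^ t in IH h4 *; set Y := (q - p) ^ t.+1 in IH h2 h4 *.
nia.
Qed.

Lemma binom_le N i : 'C(N, i) <= N ^ i.
Proof.
apply: leq_trans (ffact_hi N i); rewrite -bin_ffact; apply: leq_pmulr.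
exact: fact_gt0.
Qed.

Lemma small_sum t k N : 0 < N * k ->
  \sum_(i < t) 'C(N, i) * k ^ i <= t * (N * k) ^ t.-1.
Proof.
move=> Nk0.
apply: leq_trans (_ : \sum_(i < t) (N * k) ^ t.-1 <= _).
  apply: leq_sum => i _.
  apply: leq_trans (_ : (N * k) ^ i <= _).
    by rewrite expnMn leq_mul2r binom_le orbT.
  by apply: leq_pexp2l => //; have := ltn_ord i; lia.
by rewrite sum_nat_const card_ord.
Qed.

Lemma key t k p Q q : 0 < t -> 0 < k -> 1 < p -> Q * (p - 1) = q - 1 -> p <= q ->
  let A := \sum_(i < t.+1) 'C(t * Q, i) * k ^ i in
  let K := (t * k) ^ t * t * p + t * (t * k) ^ t.-1 * t`! * (p - 1) ^ t in
  A * t`! * (p - 1) ^ t <= (t * k) ^ t * q ^ t + K * q ^ t.-1 /\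
  (t * k) ^ t * q ^ t <= A * t`! * (p - 1) ^ t + K * q ^ t.-1.
Proof.
move=> t0 k0 p1 Qc pq A K.
set c := p - 1 in Qc K *.
have Q0 : 0 < Q by case: Q Qc {A} => //= h; lia.
set N := t * Q in A *.
have Qq : Q <= q by apply: leq_trans (_ : Q * c <= q); [rewrite leq_pmulr //; lia | lia].
set a := \sum_(i < t) 'C(N, i) * k ^ i.
have AE : A = a + 'C(N, t) * k ^ t by rewrite /A big_ord_recr.
have mainE : 'C(N, t) * k ^ t * t`! * c ^ t = N ^_ t * k ^ t * c ^ t.
  by rewrite -bin_ffact; ring.
split.
  have ha : a <= t * (t * k) ^ t.-1 * q ^ t.-1.
    have Nk : 0 < N * k by rewrite /N !muln_gt0 t0 Q0 k0.
    apply: leq_trans (@small_sum t k N Nk) _.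
    rewrite -mulnA -expnMn leq_mul2l; apply/orP; right; apply: lexp.
    by rewrite /N mulnAC leq_mul2l Qq orbT.
  have hm : N ^_ t * k ^ t * c ^ t <= (t * k) ^ t * q ^ t.
    apply: leq_trans (_ : N ^ t * k ^ t * c ^ t <= _).
      by rewrite !leq_mul2r ffact_hi !orbT.
    rewrite -!expnMn; apply: lexp.
    have -> : N * k * c = t * k * (Q * c) by rewrite /N; ring.
    by rewrite Qc; apply: leq_mul => //; lia.
  rewrite AE mulnDl mulnDl mainE addnC; apply: leq_add => //.
  rewrite /K mulnDl; apply: leq_trans (leq_addl _ _).
  apply: leq_trans (_ : t * (t * k) ^ t.-1 * q ^ t.-1 * t`! * c ^ t <= _).
    by rewrite !leq_mul2r ha !orbT.
  apply: eq_leq; ring.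
have hb := bern t pq.
apply: leq_trans (_ : (t * k) ^ t * ((q - p) ^ t + t * p * q ^ t.-1) <= _).
  by rewrite leq_mul2l hb orbT.
rewrite mulnDr; apply: leq_add; last first.
  rewrite /K mulnDl; apply: leq_trans (leq_addr _ _); rewrite -!mulnA leq_mul2l.
  by apply/orP; right; rewrite !mulnA.
have qp : q - p = (Q - 1) * c by rewrite mulnBl mul1n Qc /c; lia.
apply: leq_trans (_ : 'C(N, t) * k ^ t * t`! * c ^ t <= _); last first.
  by rewrite !leq_mul2r AE leq_addl !orbT.
rewrite mainE qp.
apply: leq_trans (_ : (N - t) ^ t * k ^ t * c ^ t <= _); last first.
  by rewrite !leq_mul2r ffact_lo !orbT.
have -> : N - t = t * (Q - 1) by rewrite /N mulnBr muln1.
by rewrite !expnMn; apply: eq_leq; ring.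
Qed.

End PartI.
Import PartI.

Module PartJ.
Import Order.TTheory GRing.Theory Num.Theory.
Set Implicit Arguments. Unset Strict Implicit.
Local Open Scope ring_scope.

Lemma Qdiv p m : (1 < p)%N -> ((p ^ m - 1) %/ (p - 1) * (p - 1) = p ^ m - 1)%N.
Proof.
move=> p1; apply: divnK.
by rewrite !subn1 predn_exp dvdn_mulr.
Qed.

Lemma abs_bound (X Y Z : rat) : X <= Y + Z -> Y <= X + Z -> `|X - Y| <= Z.
Proof.
move=> h1 h2; rewrite ler_norml; apply/andP; split; lra.
Qed.

Lemma conv_part t k p : (0 < t)%N -> (0 < k)%N -> (1 < p)%N ->
  forall eps : rat, 0 < eps -> exists m0 : nat, forall m : nat, (m0 <= m)%N ->
  `| ((\sum_(i < t.+1) 'C(t * ((p ^ m - 1) %/ (p - 1)), i) * k ^ i)%N%:R : rat)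
      / (((t * ((p ^ m - 1) %/ (p - 1)) * (p - 1))%N%:R / t%:R + 1) ^+ t)
     - ((t * k) ^ t)%N%:R / ((t `! * (p - 1) ^ t)%N%:R) | < eps.
Proof.
move=> t0 k0 p1 eps e0.
set K := ((t * k) ^ t * t * p + t * (t * k) ^ t.-1 * t`! * (p - 1) ^ t)%N.
pose m0 := (Num.bound (K%:R / eps)).+1.
exists m0 => m mm0.
have m1 : (0 < m)%N by apply: leq_trans mm0.
set Q := ((p ^ m - 1) %/ (p - 1))%N.
set q := (p ^ m)%N.
have Qc : (Q * (p - 1) = q - 1)%N by exact: Qdiv.
have pq : (p <= q)%N by rewrite /q -{1}(expn1 p) leq_pexp2l // ltnW.
have q1 : (1 < q)%N by apply: leq_trans pq.
have mq : (m < q)%N.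
  rewrite /q; elim: (m) => // n IH; rewrite expnS.
  apply: leq_trans (_ : (p ^ n).*2 <= _)%N; first by rewrite -addnn; lia.
  by rewrite -mul2n leq_mul2r p1 orbT.
have [h1 h2] := @key t k p Q q t0 k0 p1 Qc pq.
set A := (\sum_(i < t.+1) 'C(t * Q, i) * k ^ i)%N in h1 h2 *.
rewrite -/K in h1 h2.
have den : ((t * Q * (p - 1))%N%:R / t%:R + 1 : rat) = q%:R.
  rewrite -mulnA Qc natrM mulrC mulrA mulVf ?pnatr_eq0 -?lt0n // mul1r natr1 subn1 prednK //; lia.
rewrite den -natrX.
set D := (t`! * (p - 1) ^ t)%N.
have D0 : (0 < D)%N by rewrite /D muln_gt0 fact_gt0 expn_gt0; lia.
have qt0 : (0 < q ^ t)%N by rewrite expn_gt0; lia.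
have -> : (A%:R / (q ^ t)%:R - ((t * k) ^ t)%N%:R / D%:R : rat) =
    ((A * D)%N%:R - ((t * k) ^ t * q ^ t)%N%:R) / ((q ^ t * D)%N%:R).
  rewrite !natrM; field.
  rewrite !pnatr_eq0 -!lt0n qt0 fact_gt0 expn_gt0 /=; lia.
rewrite normrM normfV normr_nat.
rewrite ltr_pdivrMr ?ltr0n ?muln_gt0 ?qt0 //.
apply: le_lt_trans (_ : (K * q ^ t.-1)%N%:R < _).
  apply: abs_bound; rewrite -natrD ler_nat.
    by move: h1; rewrite -mulnA.
  by move: h2; rewrite -mulnA.
have qtE : (q ^ t = q * q ^ t.-1)%N by rewrite -expnS prednK.
rewrite qtE !natrM.
have qt1 : (0 < q ^ t.-1)%N by rewrite expn_gt0; lia.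
have hK : K%:R < eps * q%:R.
  have hb := @archi_boundP _ (K%:R / eps) (divr_ge0 (ler0n _ _) (ltW e0)).
  rewrite mulrC -ltr_pdivrMr //.
  apply: lt_trans hb _; rewrite ltr_nat.
  move: mm0 mq; rewrite /m0; lia.
apply: (@lt_le_trans _ _ (eps * q%:R * (q ^ t.-1)%:R)).
  by rewrite ltr_pM2r ?ltr0n.
rewrite !mulrA; set z := eps * q%:R * (q ^ t.-1)%:R.
rewrite -[z * _ * _]mulrA -natrM; apply: ler_peMr; last by rewrite ler1n.
by rewrite /z mulr_ge0 // mulr_ge0 // ltW.
by rewrite fact_gt0 expn_gt0 subn_gt0 p1.
Qed.

Lemma den_eq t p m : (0 < t)%N -> (1 < p)%N -> (0 < m)%N ->
  ((t * ((p ^ m - 1) %/ (p - 1)) * (p - 1))%N%:R / t%:R + 1 : rat) = (p ^ m)%N%:R.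
Proof.
move=> t0 p1 m0.
have Qc := @Qdiv p m p1.
have q1 : (1 < p ^ m)%N by rewrite -{1}(expn0 p) ltn_exp2l.
rewrite -mulnA Qc natrM mulrC mulrA mulVf ?pnatr_eq0 -?lt0n // mul1r natr1 subn1 prednK //; lia.
Qed.

End PartJ.
Import PartJ.

Module PartK.
Set Implicit Arguments. Unset Strict Implicit.

Lemma psibar_prop x : 1 < x -> prime (psibar x) /\ psibar x <= x.
Proof.
move=> x1.
have two : 2 < x.+1 by [].
have A0 : 0 < #|[pred q : 'I_x.+1 | prime q]|.
  by apply/card_gt0P; exists (Ordinal two).
have [i0 Pi0 E] := eq_bigmax_cond (fun q : 'I_x.+1 => nat_of_ord q) A0.
rewrite /psibar E; split; first by move: Pi0; rewrite inE.
by rewrite -ltnS ltn_ord.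
Qed.

End PartK.
Import PartK.

Import Order.TTheory GRing.Theory Num.Theory.
Local Open Scope ring_scope.

Theorem corollary11 (kp km t : nat) :
  (km <= kp)%N -> (0 < kp + km)%N -> (0 < t)%N ->
  let p := psibar (kp + km + 1) in
  let nn := fun m : nat => (t * ((p ^ m - 1) %/ (p - 1)))%N in
  let delta := fun m : nat =>
    ((\sum_(i < t.+1) 'C(nn m, i) * (kp + km) ^ i)%N%:R : rat)
      / (((nn m * (p - 1))%N%:R / t%:R + 1) ^+ t) in
  (forall m : nat, (0 < m)%N ->
     (exists S : {set 'rV['Z_(p ^ m)]_t},
        #|S| = nn m /\ diamond_cover (intv_star (- km%:Z) kp%:Z) t S) /\
     (exists L : 'rV[int]_(nn m) -> Prop,
        lattice_covering L (ballB (nn m) t kp km) /\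
        has_density L (ballB (nn m) t kp km) (delta m))) /\
  (forall eps : rat, 0 < eps -> exists m0 : nat, forall m : nat, (m0 <= m)%N ->
     `| delta m - ((t * (kp + km)) ^ t)%N%:R / ((t `! * (p - 1) ^ t)%N%:R) | < eps).
Proof.
move=> _ k0 t0 p nn delta.
have x1 : (1 < kp + km + 1)%N by rewrite addn1 ltnS.
have [pp pk] := psibar_prop x1.
have p1 : (1 < p)%N by exact: prime_gt1.
split; last by move=> eps e0; exact: (conv_part t0 k0 p1 e0).
move=> m m0.
have HS : #|Sfull p m t| = nn m.
  rewrite card_Sfull /nn; congr (_ * _)%N.
  by rewrite -(@card_S1 p m pp m0) mulKn // subn_gt0.
have cov := @cover_Sfull p m t kp km pp m0 pk.
split; first by exists (Sfull p m t).
have Mb : forall c, intv_star (- km%:Z) kp%:Z c -> (- km%:Z <= c <= kp%:Z).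
  by move=> c /andP[].
have [L [Lc Li]] := lattice_part HS Mb cov.
exists L; split => //.
exists (\sum_(i < t.+1) 'C(nn m, i) * (kp + km) ^ i)%N, #|'rV['Z_(p ^ m)]_t|.
split; first exact: ball_count.
split => //.
rewrite /delta /nn den_eq // card_mx card_Zq ?N1 // mul1n !natrX.
by [].
Qed.
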